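(* Let $V=[0,1]$ and let $\{M_f(\cdot;\rho)\}_{\rho\in[0,1]}$ be a family of nonnegative distributions on $V$ with $\int_V M_f(v;\rho)\,dv=\rho$, differentiable with respect to $\rho$. Define $Q_{\mathrm{eq}}(\rho)=\int_V v\,M_f(v;\rho)\,dv$, $U_{\mathrm{eq}}(\rho)=\frac{1}{\rho}Q_{\mathrm{eq}}(\rho)$, \[ \mathrm{Var}(v)(\rho)=\int_V \big(v-U_{\mathrm{eq}}(\rho)\big)^2 M_f(v;\rho)\,dv, \qquad \mu(\rho)=\int_V v^2\,\partial_\rho M_f(v;\rho)\,dv-\big(Q_{\mathrm{eq}}'(\rho)\big)^2 . \] Assume there exists $\widetilde{\rho}\in(0,1)$ such that for all $\rho\in(\widetilde{\rho},1)$ \[ Q_{\mathrm{eq}}'(\rho)=\int_V v\,\partial_\rho M_f(v;\rho)\,dv<0 \quad\text{and}\quad \partial_\rho\,\mathrm{Var}(v)(\rho)<0 . \] Then $\mu(\rho)<0$ for all $\rho\in(\widetilde{\rho},1)$.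
   Context: Here $M_f(v;\rho)$ models the equilibrium distribution of microscopic vehicle speeds $v\in[0,1]$ (dimensionless, maximum speed $1$) at density $\rho\in[0,1]$ (dimensionless, maximum density $1$); $\mu(\rho)$ is the diffusion coefficient arising from the first-order Chapman–Enskog expansion of the BGK model $\partial_t f+v\partial_x f=\frac1\epsilon(M_f(v;\rho)-f)$. *)

(* Defs.v *)
From Stdlib Require Import Reals.
From Coquelicot Require Import Coquelicot.
Open Scope R_scope.

Definition dM (M : R -> R -> R) (v rho : R) : R := Derive (fun r => M v r) rho.

Definition Qeq (M : R -> R -> R) (rho : R) : R := RInt (fun v => v * M v rho) 0 1.

Definition Ueq (M : R -> R -> R) (rho : R) : R := Qeq M rho / rho.

Definition Varv (M : R -> R -> R) (rho : R) : R :=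
  RInt (fun v => (v - Ueq M rho) ^ 2 * M v rho) 0 1.

Definition mu (M : R -> R -> R) (rho : R) : R :=
  RInt (fun v => v ^ 2 * dM M v rho) 0 1 - (Derive (Qeq M) rho) ^ 2.

(* Main.v *)
Require Import Defs.
From Stdlib Require Import Reals Lra.
From Coquelicot Require Import Coquelicot.
Open Scope R_scope.

Lemma c2d_swap (f : R -> R -> R) x y :
  continuity_2d_pt f x y -> continuity_2d_pt (fun u v => f v u) y x.
Proof.
  intros H eps. destruct (H eps) as [d Hd]. exists d. intros u v Hu Hv. apply Hd; auto.
Qed.

Lemma c2d_cont1 (f : R -> R -> R) x y :
  continuity_2d_pt f x y -> continuous (fun t => f t y) x.
Proof.
  intros H. apply filterlim_locally. intros eps. destruct (H eps) as [d Hd].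
  exists d. intros z Hz. unfold ball; simpl. unfold AbsRing_ball, abs, minus, plus, opp; simpl.
  apply Hd. exact Hz. rewrite Rminus_eq_0, Rabs_R0. apply cond_pos.
Qed.

Lemma loc01 (r : R) : 0 < r < 1 -> locally r (fun x => 0 < x < 1).
Proof.
  intros Hr. apply (locally_interval _ r (Finite 0) (Finite 1)); simpl; try lra.
  intros; lra.
Qed.

Section W.
Variable M : R -> R -> R.
Hypothesis HMcont : forall v rho, 0 <= v <= 1 -> 0 < rho < 1 -> continuity_2d_pt M v rho.
Hypothesis Hdiff : forall v rho, 0 <= v <= 1 -> 0 < rho < 1 -> ex_derive (fun r => M v r) rho.
Hypothesis HdMcont : forall v rho, 0 <= v <= 1 -> 0 < rho < 1 -> continuity_2d_pt (dM M) v rho.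

Lemma wex (w : R -> R) (Hw : forall t, continuity_pt w t) r :
  0 < r < 1 -> ex_RInt (fun v => w v * M v r) 0 1.
Proof.
  intros Hr. apply (ex_RInt_continuous (V:=R_CompleteNormedModule)). rewrite Rmin_left, Rmax_right by lra.
  intros z Hz. apply (continuous_mult (K:=R_AbsRing) w (fun v => M v r)).
  apply continuity_pt_filterlim, Hw. apply c2d_cont1, HMcont; auto.
Qed.

Lemma wder (w : R -> R) (Hw : forall t, continuity_pt w t) r :
  0 < r < 1 -> is_derive (fun r => RInt (fun v => w v * M v r) 0 1) r
                  (RInt (fun v => w v * dM M v r) 0 1).
Proof.
  intros Hr.
  assert (E : RInt (fun v => w v * dM M v r) 0 1 =
              RInt (fun t => Derive (fun u => w t * M t u) r) 0 1).
  { apply RInt_ext. intros x _. rewrite Derive_scal. reflexivity. }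
  rewrite E.
  apply (is_derive_RInt_param (fun u t => w t * M t u)).
  - eapply filter_imp; [|apply (loc01 r Hr)]. intros x Hx t Ht.
    rewrite Rmin_left, Rmax_right in Ht by lra.
    apply ex_derive_scal, Hdiff; auto.
  - intros t Ht. rewrite Rmin_left, Rmax_right in Ht by lra.
    apply (continuity_2d_pt_ext (fun u v => w v * dM M v u)).
    { intros. rewrite Derive_scal. reflexivity. }
    apply continuity_2d_pt_mult.
    + apply (continuity_1d_2d_pt_comp w (fun _ v => v)). apply Hw. apply continuity_2d_pt_id2.
    + apply (c2d_swap (dM M)). apply HdMcont; auto.
  - eapply filter_imp; [|apply (loc01 r Hr)]. intros x Hx. apply wex; auto.
Qed.
End W.

Lemma lin3 (f g h : R -> R) a b c :
  ex_RInt f 0 1 -> ex_RInt g 0 1 -> ex_RInt h 0 1 ->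
  RInt (fun v => a * f v + b * g v + c * h v) 0 1 =
  a * RInt f 0 1 + b * RInt g 0 1 + c * RInt h 0 1.
Proof.
  intros Hf Hg Hh.
  apply is_RInt_unique.
  apply (is_RInt_plus (V:=R_NormedModule) (fun v => a * f v + b * g v) (fun v => c * h v)).
  apply (is_RInt_plus (V:=R_NormedModule) (fun v => a * f v) (fun v => b * g v)).
  apply (is_RInt_scal (V:=R_NormedModule) f). apply (RInt_correct (V:=R_CompleteNormedModule)); auto.
  apply (is_RInt_scal (V:=R_NormedModule) g). apply (RInt_correct (V:=R_CompleteNormedModule)); auto.
  apply (is_RInt_scal (V:=R_NormedModule) h). apply (RInt_correct (V:=R_CompleteNormedModule)); auto.
Qed.

Lemma cw (w : R -> R) : (forall t, ex_derive w t) -> forall t, continuity_pt w t.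
Proof. intros H t. apply continuity_pt_filterlim. apply (ex_derive_continuous w). apply H. Qed.

Theorem proposition3p2 (M : R -> R -> R) (rho_t : R)
  (Hnonneg : forall v rho, 0 <= v <= 1 -> 0 <= rho <= 1 -> 0 <= M v rho)
  (Hmass : forall rho, 0 <= rho <= 1 -> RInt (fun v => M v rho) 0 1 = rho)
  (HMcont : forall v rho, 0 <= v <= 1 -> 0 < rho < 1 -> continuity_2d_pt M v rho)
  (Hdiff : forall v rho, 0 <= v <= 1 -> 0 < rho < 1 -> ex_derive (fun r => M v r) rho)
  (HdMcont : forall v rho, 0 <= v <= 1 -> 0 < rho < 1 -> continuity_2d_pt (dM M) v rho)
  (Hrt : 0 < rho_t < 1)
  (HQ : forall rho, rho_t < rho < 1 ->
          Derive (Qeq M) rho = RInt (fun v => v * dM M v rho) 0 1 /\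
          Derive (Qeq M) rho < 0)
  (HVar : forall rho, rho_t < rho < 1 -> Derive (Varv M) rho < 0) :
  forall rho, rho_t < rho < 1 -> mu M rho < 0.
Proof.
  intros rho Hr. assert (H01 : 0 < rho < 1) by lra.
  assert (c2 : forall t, continuity_pt (fun v => v ^ 2) t) by (apply cw; intros; auto_derive; auto).
  assert (c1 : forall t, continuity_pt (fun v => v) t) by (apply cw; intros; auto_derive; auto).
  assert (c0 : forall t, continuity_pt (fun v => 1) t) by (apply cw; intros; auto_derive; auto).
  set (S := fun r => RInt (fun v => v ^ 2 * M v r) 0 1).
  assert (Hloc : locally rho (fun r => Varv M r = S r - Qeq M r ^ 2 / r)).
  { eapply filter_imp; [|apply (loc01 rho H01)]. intros r Hr'.
    unfold Varv, Ueq, S. set (U := Qeq M r / r).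
    assert (E : RInt (fun v => (v - U) ^ 2 * M v r) 0 1 = RInt (fun v => 1 * (v ^ 2 * M v r) + (-2 * U) * (v * M v r) + U ^ 2 * (M v r)) 0 1).
    { apply RInt_ext. intros x _.
      assert (Ex : forall x : R, (x - U) ^ 2 * M x r = 1 * (x ^ 2 * M x r) + (-2 * U) * (x * M x r) + U ^ 2 * (M x r)) by (intros; ring).
      apply Ex. }
    rewrite E.
    rewrite lin3.
    - rewrite Hmass by lra. fold (Qeq M r). unfold U. field. lra.
    - apply (wex M HMcont (fun v => v ^ 2)); auto.
    - apply (wex M HMcont (fun v => v)); auto.
    - apply (ex_RInt_ext (fun v => 1 * M v r)). intros x _.
      assert (Ex : forall x : R, 1 * M x r = M x r) by (intros; ring). apply Ex.
      apply (wex M HMcont (fun v => 1)); auto. }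
  pose proof (wder M HMcont Hdiff HdMcont (fun v => v ^ 2) c2 rho H01) as dS.
  pose proof (wder M HMcont Hdiff HdMcont (fun v => v) c1 rho H01) as dQ.
  fold S in dS. change (is_derive (Qeq M) rho (RInt (fun v => v * dM M v rho) 0 1)) in dQ.
  set (S' := RInt (fun v => v ^ 2 * dM M v rho) 0 1) in *.
  set (Q' := RInt (fun v => v * dM M v rho) 0 1) in *.
  assert (Hg : is_derive (fun r => S r - Qeq M r ^ 2 / r) rho
             (S' - (2 * Q' * Qeq M rho * rho - Qeq M rho ^ 2) / rho ^ 2)).
  { assert (Hd : is_derive (fun r => Qeq M r ^ 2 / r) rho
        ((INR 2 * Q' * Qeq M rho ^ 1 * rho - Qeq M rho ^ 2 * 1) / rho ^ 2)).
    { apply (is_derive_div (fun r => Qeq M r ^ 2) (fun r => r)).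
      apply is_derive_pow. exact dQ. apply (is_derive_id (K:=R_AbsRing)). lra. }
    pose proof (is_derive_minus (K:=R_AbsRing) (V:=R_NormedModule) _ _ _ _ _ dS Hd) as H.
    assert (Ev : minus S' ((INR 2 * Q' * Qeq M rho ^ 1 * rho - Qeq M rho ^ 2 * 1) / rho ^ 2)
       = S' - (2 * Q' * Qeq M rho * rho - Qeq M rho ^ 2) / rho ^ 2).
    { unfold minus, plus, opp; simpl. field. lra. }
    rewrite <- Ev.
    eapply is_derive_ext; [|exact H]. intros; reflexivity. }
  assert (HV : Derive (Varv M) rho = S' - (2 * Q' * Qeq M rho * rho - Qeq M rho ^ 2) / rho ^ 2).
  { rewrite (Derive_ext_loc _ _ _ Hloc). apply is_derive_unique. exact Hg. }
  pose proof (HVar rho Hr) as HV'. rewrite HV in HV'.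
  unfold mu. rewrite (is_derive_unique _ _ _ dQ). fold S'.
  set (Q := Qeq M rho) in *.
  assert (E : S' - Q' ^ 2 = (S' - (2 * Q' * Q * rho - Q ^ 2) / rho ^ 2) - (Q' - Q / rho) ^ 2)
    by (field; lra).
  rewrite E. pose proof (pow2_ge_0 (Q' - Q / rho)). lra.
Qed.
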